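(* Let $\{X_t\}_{t\in\mathbb N^+}$ be a real-valued process adapted to a filtration $\{\mathcal F_t\}_{t\in\mathbb N}$ with $\mathcal F_0$ trivial, such that for all $t\in\mathbb N^+$, $\mathbb E[X_t\mid\mathcal F_{t-1}]=\mu$ (a constant) and $\mathbb E[(X_t-\mu)^2\mid\mathcal F_{t-1}]\le\sigma^2$. Let $\alpha\in(0,1)$, let $\phi$ be a Catoni-type influence function, and let $\{\lambda_t\}_{t\in\mathbb N^+}$ be nonrandom positive numbers. Define $$\mathrm{CI}^{\mathsf C}_t=\left\{m\in\mathbb R:\ -\frac{\sigma^2\sum_{i=1}^t\lambda_i^2}{2}-\log(2/\alpha)\le\sum_{i=1}^t\phi(\lambda_i(X_i-m))\le\frac{\sigma^2\sum_{i=1}^t\lambda_i^2}{2}+\log(2/\alpha)\right\},$$ and let $|\mathrm{CI}^{\mathsf C}_t|$ denote its width (supremum minus infimum). Let $0<\varepsilon<1$ and $t\in\mathbb N^+$ be such that $$\left(\sum_{i=1}^t\lambda_i\right)^2-2\left(\sum_{i=1}^t\lambda_i^2\right)\left(\sigma^2\sum_{i=1}^t\lambda_i^2+\log(2/\varepsilon)+\log(2/\alpha)\right)\ge0.$$ Then, with probability at least $1-\varepsilon$, $$|\mathrm{CI}^{\mathsf C}_t|\le\frac{4\left(\sigma^2\sum_{i=1}^t\lambda_i^2+\log(2/\varepsilon)+\log(2/\alpha)\right)}{\sum_{i=1}^t\lambda_i}.$$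
   Context: A function $\phi:\mathbb R\to\mathbb R$ is a Catoni-type influence function if it is increasing and $-\log(1-x+x^2/2)\le\phi(x)\le\log(1+x+x^2/2)$ for all $x\in\mathbb R$. *)

(* Defs.v *)
From HB Require Import structures.
From mathcomp Require Import all_boot all_order all_algebra.
From mathcomp Require Import all_classical all_reals all_analysis.
Set Implicit Arguments. Unset Strict Implicit. Unset Printing Implicit Defensive.
Import Order.TTheory GRing.Theory Num.Theory.
Local Open Scope classical_set_scope.
Local Open Scope ring_scope.

Definition catoni_type {R : realType} (phi : R -> R) : Prop :=
  {homo phi : x y / x <= y} /\
  forall x : R, - ln (1 - x + x ^+ 2 / 2) <= phi x /\ phi x <= ln (1 + x + x ^+ 2 / 2).

Section Defs.
Context {d : measure_display} {T : measurableType d} {R : realType}.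

Definition sub_sigma_algebra (G : set (set T)) : Prop :=
  sigma_algebra setT G /\ G `<=` measurable.

Definition G_measurable (G : set (set T)) (f : T -> R) : Prop :=
  forall B : set R, measurable B -> G (f @^-1` B).

Definition filtration (F : nat -> set (set T)) : Prop :=
  (forall t, sub_sigma_algebra (F t)) /\
  (forall s t, (s <= t)%N -> F s `<=` F t).

Definition trivial_sigma (G : set (set T)) : Prop :=
  forall A, G A -> A = set0 \/ A = setT.

Definition is_cond_exp (P : probability T R) (G : set (set T)) (X Y : T -> R) : Prop :=
  [/\ G_measurable G Y, P.-integrable setT (fun x => (X x)%:E),
      P.-integrable setT (fun x => (Y x)%:E) &
      forall A, G A ->
        (\int[P]_(x in A) (X x)%:E = \int[P]_(x in A) (Y x)%:E)%E].

End Defs.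

Definition CI_catoni {R : realType} (phi : R -> R) (lam : nat -> R)
    (sigma alpha : R) (x : nat -> R) (t : nat) : set R :=
  [set m : R |
    - (sigma ^+ 2 * (\sum_(1 <= i < t.+1) lam i ^+ 2) / 2) - ln (2 / alpha)
      <= \sum_(1 <= i < t.+1) phi (lam i * (x i - m))
    /\ \sum_(1 <= i < t.+1) phi (lam i * (x i - m))
      <= sigma ^+ 2 * (\sum_(1 <= i < t.+1) lam i ^+ 2) / 2 + ln (2 / alpha)].

Definition width {R : realType} (S : set R) : \bar R :=
  (ereal_sup (EFin @` S) - ereal_inf (EFin @` S))%E.

(* Main.v *)
Require Import Defs.
From HB Require Import structures.
From mathcomp Require Import all_boot all_order all_algebra.
From mathcomp Require Import all_classical all_reals all_analysis.
From mathcomp Require Import measurable_realfun ring lra.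
Import Order.TTheory GRing.Theory Num.Theory.
Local Open Scope classical_set_scope.
Local Open Scope ring_scope.


Lemma setEFin (R : realType) (S : set R) : [set r : R | r%:E \in EFin @` S] = S.
Proof.
apply/seteqP; split => r /=.
  by rewrite inE => -[r' Sr' [<-]].
by move=> Sr; rewrite inE; exists r.
Qed.

Lemma setEFin_ge (R : realType) (n : nat) :
  [set r : R | (n%:R%:E <= r%:E)%E] = `[n%:R, +oo[%classic.
Proof. by apply/seteqP; split => r; rewrite /= in_itv /= andbT lee_fin. Qed.

Section PullOut.
Context d (T : measurableType d) (R : realType) (P : probability T R).
Variables (G : set (set T)) (GM : G `<=` measurable) (G0 : G set0).
Variables (Q : T -> R) (c : R) (c0 : 0 <= c) (Q0 : forall x, 0 <= Q x)
  (mQ : measurable_fun setT Q)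
  (HQ : forall A, G A -> (\int[P]_(x in A) (Q x)%:E <= c%:E * P A)%E).

Definition good (f : T -> R) := [/\ measurable_fun setT f, (forall x, 0 <= f x) &
  (\int[P]_x (f x * Q x)%:E <= c%:E * \int[P]_x (f x)%:E)%E].

Lemma good_add f g : good f -> good g -> good (f \+ g).
Proof.
move=> [mf f0 hf] [mg g0 hg]; split.
- exact: measurable_realfun.measurable_funD.
- by move=> x /=; rewrite addr_ge0.
rewrite (eq_integral (fun x => (f x * Q x)%:E + (g x * Q x)%:E)%E); last first.
  by move=> x _; rewrite /= mulrDl.
rewrite ge0_integralD //; last 4 first.
  by move=> x _; rewrite lee_fin mulr_ge0.
  by apply/measurable_realfun.measurable_EFinP; exact: measurable_realfun.measurable_funM.
  by move=> x _; rewrite lee_fin mulr_ge0.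
  by apply/measurable_realfun.measurable_EFinP; exact: measurable_realfun.measurable_funM.
rewrite [X in (_ <= _ * X)%E](eq_integral (fun x => (f x)%:E + (g x)%:E)%E); last first.
  by [].
rewrite [X in (_ <= _ * X)%E]ge0_integralD //; last 4 first.
  by move=> x _; rewrite lee_fin.
  exact/measurable_realfun.measurable_EFinP.
  by move=> x _; rewrite lee_fin.
  exact/measurable_realfun.measurable_EFinP.
rewrite ge0_muleDr; last 2 first.
  by apply: integral_ge0 => x _; rewrite lee_fin.
  by apply: integral_ge0 => x _; rewrite lee_fin.
exact: leeD.
Qed.

Lemma good_scale k f : 0 <= k -> good f -> good (fun x => k * f x).
Proof.
move=> k0 [mf f0 hf]; split.
- by apply: measurable_realfun.measurable_funM => //; exact: measurable_cst.
- by move=> x; rewrite mulr_ge0.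
rewrite (eq_integral (fun x => k%:E * (f x * Q x)%:E)%E); last first.
  by move=> x _ /=; rewrite -EFinM mulrA.
rewrite ge0_integralZl_EFin //; last 2 first.
  by move=> x _; rewrite lee_fin mulr_ge0.
  by apply/measurable_realfun.measurable_EFinP; exact: measurable_realfun.measurable_funM.
rewrite [X in (_ <= _ * X)%E](eq_integral (fun x => k%:E * (f x)%:E)%E); last first.
  by move=> x _; rewrite EFinM.
rewrite ge0_integralZl_EFin //; last 2 first.
  by move=> x _; rewrite lee_fin.
  exact/measurable_realfun.measurable_EFinP.
rewrite muleCA; apply: lee_wpmul2l => //; by rewrite lee_fin.
Qed.

Lemma good_indic A : G A -> good (\1_A).
Proof.
move=> GA; have mA := GM _ GA; split.
- exact: measurable_realfun.measurable_indic.
- by move=> x; rewrite indicE.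
rewrite integral_indic // setIT.
rewrite (eq_integral ((EFin \o Q) \_ A)); last first.
  move=> x _; rewrite patchE indicE /=; case: (x \in A) => /=.
    by rewrite mul1r.
  by rewrite mul0r.
by rewrite -integral_mkcond; exact: HQ.
Qed.

Lemma good0 : good (fun=> 0).
Proof.
split.
- exact: measurable_cst.
- by [].
rewrite (eq_integral (cst 0%R)); last by move=> x _; rewrite mul0r.
by rewrite integral0 mule_ge0 // integral_ge0.
Qed.

Lemma good_sum (I : Type) (s : seq I) (F : I -> T -> R) :
  (forall i, good (F i)) -> good (fun x => \sum_(i <- s) F i x).
Proof.
move=> hF; elim: s => [|i s ih].
  have -> : (fun x => \sum_(i <- [::]) F i x) = (fun=> 0).
    by apply/funext => x; rewrite big_nil.
  exact: good0.
have -> : (fun x => \sum_(j <- i :: s) F j x) = F i \+ (fun x => \sum_(j <- s) F j x).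
  by apply/funext => x; rewrite big_cons.
exact: good_add.
Qed.

Lemma good_approx (Z : T -> R) : G_measurable G Z -> forall n,
  good (approx setT (EFin \o Z) n).
Proof.
move=> hZ n.
have h1 : good (fun x => \sum_(k < n * 2 ^ n)
   k%:R * 2 ^- n * \1_(dyadic_approx setT (EFin \o Z) n k) x).
  apply: good_sum => k; apply: good_scale => //.
  apply: good_indic => //.
  rewrite /dyadic_approx; case: ifP => _; last exact: G0.
  rewrite setTI.
  apply: (hZ [set r : R | r%:E \in EFin @` [set` dyadic_itv R n k]]).
  rewrite setEFin; exact: measurable_itv.
have h2 : good (fun x => n%:R * \1_(integer_approx setT (EFin \o Z) n) x).
  apply: good_scale => //.
  apply: good_indic => //.
  rewrite /integer_approx setTI.
  apply: (hZ [set r : R | (n%:R%:E <= r%:E)%E]).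
  rewrite setEFin_ge; exact: measurable_itv.
exact: (good_add _ _ h1 h2).
Qed.


Lemma pullout (Z : T -> R) : (forall x, 0 <= Z x) -> G_measurable G Z ->
  (\int[P]_x (Z x * Q x)%:E <= c%:E * \int[P]_x (Z x)%:E)%E.
Proof.
move=> Z0 hZ.
have mZ : measurable_fun setT Z.
  move=> _ B mB; rewrite setTI; apply: GM; exact: hZ.
have mf : measurable_fun setT (EFin \o Z : T -> \bar R) by exact/measurable_realfun.measurable_EFinP.
have f0 : forall x, setT x -> (0 <= (EFin \o Z) x)%E by move=> x _; rewrite lee_fin.
pose a := approx setT (EFin \o Z).
have ga n : good (a n) := good_approx _ hZ n.
have nda x : {homo (fun n => a n x) : n m / (n <= m)%N >-> n <= m}.
  by move=> n m nm; have /lefP := nd_approx setT (EFin \o Z) nm; exact.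
have mg n : measurable_fun setT ((fun x => (a n x * Q x)%:E) : T -> \bar R).
  apply/measurable_realfun.measurable_EFinP; apply: measurable_realfun.measurable_funM => //.
  by case: (ga n).
have -> : (\int[P]_x (Z x * Q x)%:E = \int[P]_x limn (fun n => (a n x * Q x)%:E))%E.
  apply: eq_integral => x _; apply/esym/cvg_lim => //.
  apply: cvg_EFin; first exact: nearW.
  apply: cvgMl.
  exact: (cvg_approx f0 _ (ltry _)).
rewrite monotone_convergence //; last 2 first.
  by move=> n x _; rewrite lee_fin mulr_ge0 //; case: (ga n).
  by move=> x _ n m nm; rewrite lee_fin ler_wpM2r // nda.
apply: lime_le.
  apply: ereal_nondecreasing_is_cvgn => n m nm; apply: ge0_le_integral => //.
    by move=> x _; rewrite lee_fin mulr_ge0 //; case: (ga n).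
  by move=> x _; rewrite lee_fin ler_wpM2r // nda.
apply: nearW => n.
case: (ga n) => mn an0 hn; apply: (le_trans hn); apply: lee_wpmul2l; first by rewrite lee_fin.
apply: ge0_le_integral => //.
all: try (by move=> x _; rewrite lee_fin).
all: try (by move=> x _; exact: le_approx).
by apply/(measurable_EFinP setT (a n)).
Qed.
End PullOut.


Section Step.
Context d (T : measurableType d) (R : realType) (P : probability T R).

Lemma Y_bound (A : set T) (Y : T -> R) (s : R) : measurable A -> 0 <= s ->
  P.-integrable setT (fun x => (Y x)%:E) -> {ae P, forall w, Y w <= s} ->
  (\int[P]_(x in A) (Y x)%:E <= s%:E * P A)%E.
Proof.
move=> mA s0 iY hY.
have mY : measurable_fun setT (fun x => (Y x)%:E) by case/integrableP: iY.
rewrite integralE.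
apply: (@le_trans _ _ (\int[P]_(x in A) (fun x => (Y x)%:E)^\+ x)%E).
  rewrite -[X in (_ <= X)%E]sube0; apply: leeB => //.
  by apply: integral_ge0 => x _; exact: funeneg_ge0.
rewrite -(@integral_cst _ _ _ P A mA s%:E).
apply: (ae_ge0_le_integral mA).
- by move=> x _; exact: funepos_ge0.
- by apply: measurable_funepos; exact: measurable_funS mY.
- by move=> x _; rewrite lee_fin.
- exact: measurable_cst.
- by apply: filterS hY => w Hw _; rewrite funeposE /= ge_max !lee_fin Hw s0.
Qed.


Lemma step_HQ (G : set (set T)) (GM : G `<=` measurable) (Xs Y : T -> R)
  (mu sigma lam m sg : R) :
  is_cond_exp P G Xs (fun _ => mu) ->
  is_cond_exp P G (fun w => (Xs w - mu) ^+ 2) Y -> {ae P, forall w, Y w <= sigma ^+ 2} ->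
  forall A, G A ->
  (\int[P]_(x in A) ((1 + sg * (lam * (Xs x - m)) + (lam * (Xs x - m)) ^+ 2 / 2)%:E)
     <= (1 + sg * lam * (mu - m) + lam ^+ 2 * (sigma ^+ 2 + (mu - m) ^+ 2) / 2)%:E * P A)%E.
Proof.
move=> [_ iX _ hX] [_ iU2 iY hU2] hY A GA.
have mA := GM _ GA.
set a := 1 + sg * lam * (mu - m) + lam ^+ 2 * (mu - m) ^+ 2 / 2.
set b := sg * lam + lam ^+ 2 * (mu - m).
set e := lam ^+ 2 / 2.
have e0 : 0 <= e by rewrite /e divr_ge0 // sqr_ge0.
have iXA : P.-integrable A (fun x => (Xs x)%:E) := integrableS measurableT mA (subsetT A) iX.
have iU2A : P.-integrable A (fun x => ((Xs x - mu) ^+ 2)%:E) :=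
  integrableS measurableT mA (subsetT A) iU2.
have iC k : P.-integrable A (fun=> k%:E) := finite_measure_integrable_cst P k mA.
have iUA : P.-integrable A (fun x => (Xs x - mu)%:E).
  apply: (eq_integrable mA (fun x => (Xs x)%:E - mu%:E)%E) => //.
  exact: integrableB.
have PAf : P A \is a fin_num by apply: fin_num_measure.
set pA := fine (P A).
have PAE : P A = pA%:E by rewrite fineK.
have PAE' : (P : {measure set T -> \bar R}) A = pA%:E := PAE.
have eq0 : (\int[P]_(x in A) (Xs x - mu)%:E = 0)%E.
  rewrite (eq_integral (fun x => (Xs x)%:E - (fun=> mu%:E) x)%E) //.
  rewrite integralB // (hX A GA) subee //.
  by rewrite integral_cst // PAE'.
rewrite (eq_integral (fun x => ((a%:E + b%:E * (Xs x - mu)%:E) + e%:E * ((Xs x - mu) ^+ 2)%:E)%E)); last first.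
  move=> x _; rewrite -!EFinM -!EFinD; congr EFin; rewrite /a /b /e; by field.
rewrite integralD //; last 2 first.
  apply: integrableD => //; exact: integrableZl.
  exact: integrableZl.
rewrite integralD //; last exact: integrableZl.
rewrite integralZl // eq0 mule0 adde0 integral_cst // integralZl // (hU2 A GA) PAE'.
apply: le_trans.
  apply: (leeD (lexx _)); apply: lee_wpmul2l; first by rewrite lee_fin.
  exact: (Y_bound _ _ _ mA (sqr_ge0 sigma) iY hY).
rewrite ?PAE ?PAE' -!EFinM -EFinD lee_fin le_eqVlt; apply/orP; left; apply/eqP.
rewrite /a /e; by field.
Qed.
End Step.


Section Meas.
Context {d} {T : measurableType d} {R : realType}.

Lemma Gmono (G G' : set (set T)) (f : T -> R) :
  G `<=` G' -> G_measurable G f -> G_measurable G' f.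
Proof. by move=> GG' hf B mB; apply: GG'; exact: hf. Qed.

Lemma GmP (G : set (set T)) (sG : sigma_algebra setT G) (f : T -> R) :
  G_measurable G f <->
  measurable_fun (setT : set (g_sigma_algebraType G)) (f : g_sigma_algebraType G -> R).
Proof.
split => [hf _ B mB | hf B mB].
  rewrite setTI; apply: sub_sigma_algebra; exact: hf.
have := hf measurableT B mB; rewrite setTI.
by rewrite /measurable /= sigma_algebra_id.
Qed.

Lemma Gm_meas (G : set (set T)) (GM : G `<=` measurable) (f : T -> R) :
  G_measurable G f -> measurable_fun setT f.
Proof. by move=> hf _ B mB; rewrite setTI; apply: GM; exact: hf. Qed.

End Meas.

Section Main.
Context d (T : measurableType d) (R : realType) (P : probability T R).
Variables (F : nat -> set (set T)) (X : nat -> T -> R) (mu sigma : R)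
  (phi : R -> R) (lam : nat -> R) (m sg : R).
Hypotheses (hF : filtration F)
  (hX : forall s, (0 < s)%N -> G_measurable (F s) (X s))
  (hce : forall s, (0 < s)%N -> is_cond_exp P (F s.-1) (X s) (fun _ => mu))
  (hvar : forall s, (0 < s)%N -> exists Y : T -> R,
      is_cond_exp P (F s.-1) (fun w => (X s w - mu) ^+ 2) Y /\
      {ae P, forall w, Y w <= sigma ^+ 2})
  (hphi : catoni_type phi) (hsg : sg = 1 \/ sg = -1).

Let FM s : F s `<=` measurable. Proof. by case: hF => h _; case: (h s). Qed.
Let FS s : sigma_algebra setT (F s). Proof. by case: hF => h _; case: (h s). Qed.
Let F0 s : F s set0. Proof. by case: (FS s). Qed.
Let Fmono s : F s `<=` F s.+1. Proof. by case: hF => _ h; apply: h. Qed.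

Let mphi : measurable_fun setT phi.
Proof. apply: nondecreasing_measurable => //; exact: hphi.1. Qed.

Definition Vt i w := sg * phi (lam i * (X i w - m)).
Definition Sm s w := \sum_(1 <= i < s.+1) Vt i w.

Lemma V_meas i : (0 < i)%N -> G_measurable (F i) (Vt i).
Proof.
move=> i0; apply/GmP => //.
have -> : Vt i = (fun y => sg * phi (lam i * (y - m))) \o X i by [].
apply: measurableT_comp; last exact/GmP/hX.
apply: measurable_funM; first exact: measurable_cst.
apply: measurableT_comp; first exact: mphi.
apply: measurable_funM; first exact: measurable_cst.
apply: measurable_funB => //; exact: measurable_cst.
Qed.

Lemma Sm_meas s : G_measurable (F s) (Sm s).
Proof.
elim: s => [|s IH].
  have -> : Sm 0 = fun=> 0 by apply/funext => w; rewrite /Sm big_geq.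
  apply/GmP => //; exact: measurable_cst.
have -> : Sm s.+1 = Sm s \+ Vt s.+1.
  by apply/funext => w; rewrite /Sm big_nat_recr.
apply/GmP => //; apply: measurable_funD; apply/GmP => //.
  exact: Gmono (Fmono s) IH.
exact: V_meas.
Qed.

Lemma Z_meas s : G_measurable (F s) (fun w => expR (Sm s w)).
Proof.
apply/GmP => //; apply: measurableT_comp; first exact: measurable_expR.
exact/GmP/Sm_meas.
Qed.

Lemma expV_le y : expR (sg * phi y) <= 1 + sg * y + y ^+ 2 / 2.
Proof.
have [h1 h2] := hphi.2 y.
case: hsg => ->.
  have p : 0 < 1 + y + y ^+ 2 / 2 by nra.
  by rewrite !mul1r -ler_ln ?posrE ?expR_gt0 // expRK.
have p : 0 < 1 - y + y ^+ 2 / 2 by nra.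
by rewrite !mulN1r -ler_ln ?posrE ?expR_gt0 // expRK lerNl.
Qed.

Definition kk i := sg * lam i * (mu - m) + lam i ^+ 2 * (sigma ^+ 2 + (mu - m) ^+ 2) / 2.

Lemma mgf s : (\int[P]_x (expR (Sm s x))%:E <= (expR (\sum_(1 <= i < s.+1) kk i))%:E)%E.
Proof.
elim: s => [|s IH].
  rewrite big_geq // expR0.
  rewrite (eq_integral (fun=> 1%:E)); last by move=> x _; rewrite /Sm big_geq // expR0.
  have PT : (P : {measure set T -> \bar R}) setT = 1%E := probability_setT P.
  by rewrite integral_cst // PT mul1e.
have [Y [hY1 hY2]] := hvar _ (ltn0Sn s).
have hc := hce _ (ltn0Sn s).
pose Q := fun x => 1 + sg * (lam s.+1 * (X s.+1 x - m)) + (lam s.+1 * (X s.+1 x - m)) ^+ 2 / 2.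
have Q0 : forall x, 0 <= Q x.
  by move=> x; apply: le_trans (ltW (expR_gt0 _)) (expV_le _).
have mXs : measurable_fun setT (X s.+1) := Gm_meas _ (FM _) _ (hX _ (ltn0Sn s)).
have mQ : measurable_fun setT Q.
  apply: measurable_funD; first apply: measurable_funD.
  - exact: measurable_cst.
  - apply: measurable_funM; first exact: measurable_cst.
    apply: measurable_funM; first exact: measurable_cst.
    apply: measurable_funB => //; exact: measurable_cst.
  - apply: measurable_funM; last exact: measurable_cst.
    apply: measurable_funX; apply: measurable_funM; first exact: measurable_cst.
    apply: measurable_funB => //; exact: measurable_cst.
have HQ := @step_HQ _ _ _ P (F s) (FM s) (X s.+1) Y mu sigma (lam s.+1) m sg hc hY1 hY2.
set cc := 1 + sg * lam s.+1 * (mu - m) + lam s.+1 ^+ 2 * (sigma ^+ 2 + (mu - m) ^+ 2) / 2 in HQ.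
have c0 : 0 <= cc.
  rewrite /cc; case: hsg => ->.
    have h1 := sqr_ge0 (1 + lam s.+1 * (mu - m)); have h2 := sqr_ge0 (lam s.+1 * sigma); nra.
  have h1 := sqr_ge0 (1 - lam s.+1 * (mu - m)); have h2 := sqr_ge0 (lam s.+1 * sigma); nra.
have Z0 : forall x, 0 <= expR (Sm s x) by move=> x; exact: ltW (expR_gt0 _).
have PO := @pullout _ _ _ P (F s) (FM s) (F0 s) Q cc c0 Q0 mQ HQ _ Z0 (Z_meas s).
rewrite (eq_integral (fun x => (expR (Sm s x) * expR (Vt s.+1 x))%:E)); last first.
  by move=> x _; rewrite /Sm big_nat_recr //= expRD.
apply: (@le_trans _ _ (\int[P]_x (expR (Sm s x) * Q x)%:E)%E).
  apply: (ge0_le_integral P measurableT).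
  - by move=> x _; rewrite lee_fin mulr_ge0 // ltW // expR_gt0.
  - apply/measurable_EFinP; apply: measurable_funM.
      by apply: (Gm_meas _ (FM s)); exact: Z_meas.
    apply: measurableT_comp; first exact: measurable_expR.
    by apply: (Gm_meas _ (FM s.+1)); exact: V_meas.
  - apply/measurable_EFinP; apply: measurable_funM => //.
    by apply: (Gm_meas _ (FM s)); exact: Z_meas.
  - move=> x _; rewrite lee_fin; apply: ler_wpM2l => //.
    exact: expV_le.
apply: le_trans; first exact: PO.
apply: le_trans; first (apply: lee_wpmul2l; [by rewrite lee_fin | exact: IH]).
rewrite -EFinM lee_fin [X in _ <= expR X]big_nat_recr //= expRD mulrC.
apply: ler_wpM2l; first exact: ltW (expR_gt0 _).
by rewrite /cc -addrA /kk; exact: expR_ge1Dx.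
Qed.

End Main.


Section Markov.
Context d (T : measurableType d) (R : realType) (P : probability T R).

Lemma meas_ge (f : T -> R) (a : R) : measurable_fun setT f ->
  measurable [set w | a <= f w].
Proof.
move=> mf; have := mf measurableT `[a, +oo[%classic (measurable_itv _).
rewrite setTI; congr measurable.
by apply/seteqP; split => w; rewrite /= in_itv /= andbT.
Qed.

Lemma markov_exp (f : T -> R) (a b : R) : measurable_fun setT f ->
  (\int[P]_x (expR (f x))%:E <= (expR b)%:E)%E ->
  (P [set w | (a <= f w)%R] <= (expR (b - a))%:E)%E.
Proof.
move=> mf hI.
set B := [set w | (a <= f w)%R].
have mB : measurable B := meas_ge f a mf.
have PB : (\int[P]_x (\1_B x)%:E = P B)%E by rewrite integral_indic // setIT.
have h : ((expR a)%:E * P B <= (expR b)%:E)%E.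
  rewrite -PB -ge0_integralZl_EFin //; try (by move=> x _; rewrite lee_fin indicE);
    try (by apply/measurable_EFinP; exact: measurable_indic); try (exact: ltW (expR_gt0 _)).
  apply: le_trans; last exact: hI.
  apply: (ge0_le_integral P measurableT).
  - by move=> x _; rewrite lee_fin mulr_ge0 // ?indicE // ltW // expR_gt0.
  - apply/measurable_EFinP; apply: measurable_funM; first exact: measurable_cst.
    exact: measurable_indic.
  - by apply/measurable_EFinP; apply: measurableT_comp => //; exact: measurable_expR.
  move=> x _; rewrite lee_fin indicE.
  have [xB|xB] := boolP (x \in B).
    by rewrite mulr1 ler_expR; move: xB; rewrite inE.
  by rewrite mulr0 ltW // expR_gt0.
have PBf : P B \is a fin_num by apply: fin_num_measure.
rewrite -(fineK PBf) lee_fin.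
move: h; rewrite -(fineK PBf) -EFinM lee_fin => h.
have ea := expR_gt0 a.
rewrite expRD expRN -[fine (P B)](mulKf (lt0r_neq0 ea)) mulrC ler_wpM2r //.

Qed.

End Markov.


Lemma sum_pos (R : realType) (f : nat -> R) t : (0 < t)%N ->
  (forall i, (0 < i)%N -> 0 < f i) -> 0 < \sum_(1 <= i < t.+1) f i.
Proof.
move=> t0 hf; rewrite big_nat_recr //=.
have h1 : 0 <= \sum_(1 <= i < t) f i.
  rewrite big_nat_cond; apply: sumr_ge0 => i /andP[/andP[i1 _] _].
  exact: ltW (hf _ i1).
have h2 := hf t t0; lra.
Qed.

Lemma alg_width (R : realType) (L1 L2 C r : R) : 0 < L1 -> 0 < L2 -> 0 <= r ->
  C = (L1 ^+ 2 - r ^+ 2) / (2 * L2) -> r <= L1 ->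
  2 * ((L1 - r) / L2) <= 4 * C / L1.
Proof.
move=> L1p L2p r0 -> rL1.
rewrite -subr_ge0.
have -> : 4 * ((L1 ^+ 2 - r ^+ 2) / (2 * L2)) / L1 - 2 * ((L1 - r) / L2) =
   2 * (L1 - r) * r / (L1 * L2).
  by field; rewrite (lt0r_neq0 L2p) (lt0r_neq0 L1p).
apply: divr_ge0; last by apply: mulr_ge0; apply: ltW.
by apply: mulr_ge0 => //; apply: mulr_ge0 => //; rewrite subr_ge0.
Qed.

Theorem theorem4 (d : measure_display) (T : measurableType d) (R : realType)
  (P : probability T R) (F : nat -> set (set T)) (X : nat -> T -> R)
  (mu sigma alpha eps : R) (phi : R -> R) (lam : nat -> R) (t : nat) :
  filtration F -> trivial_sigma (F 0%N) ->
  (forall s, (0 < s)%N -> G_measurable (F s) (X s)) ->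
  (forall s, (0 < s)%N -> is_cond_exp P (F s.-1) (X s) (fun _ => mu)) ->
  (forall s, (0 < s)%N -> exists Y : T -> R,
      is_cond_exp P (F s.-1) (fun w => (X s w - mu) ^+ 2) Y /\
      {ae P, forall w, Y w <= sigma ^+ 2}) ->
  0 < alpha < 1 ->
  catoni_type phi ->
  (forall s, (0 < s)%N -> 0 < lam s) ->
  0 < eps < 1 -> (0 < t)%N ->
  0 <= (\sum_(1 <= i < t.+1) lam i) ^+ 2
       - 2 * (\sum_(1 <= i < t.+1) lam i ^+ 2)
         * (sigma ^+ 2 * (\sum_(1 <= i < t.+1) lam i ^+ 2)
            + ln (2 / eps) + ln (2 / alpha)) ->
  exists A : set T, measurable A /\
    A `<=` [set w | (width (CI_catoni phi lam sigma alpha (fun i => X i w) t)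
                     <= (4 * (sigma ^+ 2 * (\sum_(1 <= i < t.+1) lam i ^+ 2)
                              + ln (2 / eps) + ln (2 / alpha))
                         / (\sum_(1 <= i < t.+1) lam i))%:E)%E] /\
    ((1 - eps)%:E <= P A)%E.
Proof.
move=> hF _ hX hce hvar /andP[a0 a1] hphi hlam /andP[e0 e1] t0 hD.
rewrite /width /CI_catoni.
set L1 := \sum_(1 <= i < t.+1) lam i.
set L2 := \sum_(1 <= i < t.+1) lam i ^+ 2.
set Le := ln (2 / eps).
set La := ln (2 / alpha).
set C := sigma ^+ 2 * L2 + Le + La.
have L1p : 0 < L1 by apply: sum_pos.
have L2p : 0 < L2 by apply: sum_pos => // i i0; rewrite exprn_gt0 // hlam.
have Lep : 0 < Le by apply: ln_gt0; rewrite ltr_pdivlMr // mul1r; lra.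
have Lap : 0 < La by apply: ln_gt0; rewrite ltr_pdivlMr // mul1r; lra.
have C0 : 0 <= C by rewrite /C; have := sqr_ge0 sigma; nra.
set r := Num.sqrt (L1 ^+ 2 - 2 * L2 * C).
have r0 : 0 <= r by exact: sqrtr_ge0.
have r2 : r ^+ 2 = L1 ^+ 2 - 2 * L2 * C by exact: sqr_sqrtr.
have rL1 : r <= L1 by have := mulr_ge0 (ltW L2p) C0; nra.
have hC : C = (L1 ^+ 2 - r ^+ 2) / (2 * L2).
  by rewrite r2; field; rewrite (lt0r_neq0 L2p).
set ds := (L1 - r) / L2.
have ds0 : 0 <= ds by rewrite /ds divr_ge0 // ?subr_ge0 // ltW.
pose S m w := \sum_(1 <= i < t.+1) phi (lam i * (X i w - m)).
pose msg sg := mu + sg * ds.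
pose K sg := \sum_(1 <= i < t.+1) kk R mu sigma lam (msg sg) sg i.
have hK sg : (sg = 1 \/ sg = -1) -> K sg + Le = - (sigma ^+ 2 * L2 / 2) - La.
  move=> hsg.
  have -> : K sg = - ds * L1 + (sigma ^+ 2 + ds ^+ 2) / 2 * L2.
    rewrite /K /L1 /L2 !mulr_sumr -big_split /=; apply: eq_bigr => i _.
    by rewrite /kk /msg; case: hsg => ->; ring.
  have hLe : Le = C - sigma ^+ 2 * L2 - La by rewrite /C; ring.
  by rewrite hLe hC /ds; field; rewrite (lt0r_neq0 L2p).
have Sm1 m w : Sm d T R X phi lam m 1 t w = S m w.
  by apply: eq_bigr => i _; rewrite /Vt mul1r.
have SmN m w : Sm d T R X phi lam m (-1) t w = - S m w.
  by rewrite /Sm /S -sumrN; apply: eq_bigr => i _; rewrite /Vt mulN1r.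
have FMt : F t `<=` measurable by case: hF => h _; case: (h t).
have mSm sg : measurable_fun setT (Sm d T R X phi lam (msg sg) sg t).
  exact: (Gm_meas _ FMt _ (Sm_meas _ _ _ _ _ phi lam (msg sg) sg hF hX hphi t)).
pose Bad sg := [set w | (K sg + Le <= Sm d T R X phi lam (msg sg) sg t w)%R].
have mB sg : measurable (Bad sg) := @meas_ge _ _ _ _ _ (mSm sg).
have PB sg : (sg = 1 \/ sg = -1) -> (P (Bad sg) <= (eps / 2)%:E)%E.
  move=> hsg.
  have := @markov_exp _ _ _ P _ (K sg + Le) (K sg) (mSm sg)
    (mgf _ _ _ P _ _ mu sigma phi lam (msg sg) sg hF hX hce hvar hphi hsg t).
  rewrite (_ : K sg - (K sg + Le) = - Le); last by ring.
  by rewrite expRN lnK ?invf_div // posrE divr_gt0.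
exists (~` (Bad 1 `|` Bad (-1))); split.
  by apply: measurableC; apply: measurableU.
split.
  move=> w /= Aw.
  have hup : S (msg 1) w < - (sigma ^+ 2 * L2 / 2) - La.
    rewrite -(hK 1 (or_introl erefl)) -Sm1 ltNge; apply/negP => h; apply: Aw; left; exact: h.
  have hlo : sigma ^+ 2 * L2 / 2 + La < S (msg (-1)) w.
    have h : ~ (K (-1) + Le <= Sm d T R X phi lam (msg (-1)) (-1) t w).
      by move=> h; apply: Aw; right.
    move/negP: h; rewrite -ltNge SmN (hK (-1) (or_intror erefl)) => h; lra.
  have Santi m1 m2 : m1 <= m2 -> S m2 w <= S m1 w.
    move=> h; apply: ler_sum_nat => i /andP[i1 _]; apply: hphi.1.
    by apply: ler_wpM2l; [exact: ltW (hlam _ i1) | exact: lerB (lexx _) h].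
  apply: (@le_trans _ _ ((msg 1)%:E - (msg (-1))%:E)%E).
    apply: leeB.
      apply: ge_ereal_sup => y [m [hm1 hm2] <-]; rewrite lee_fin leNgt; apply/negP => hm.
      have h1 : - (sigma ^+ 2 * L2 / 2) - La <= S m w := hm1.
      have := Santi _ _ (ltW hm); lra.
    apply: le_ereal_inf_tmp => y [m [hm1 hm2] <-]; rewrite lee_fin leNgt; apply/negP => hm.
    have h2 : S m w <= sigma ^+ 2 * L2 / 2 + La := hm2.
    have := Santi _ _ (ltW hm); lra.
  rewrite -EFinB lee_fin /msg.
  have -> : mu + 1 * ds - (mu + -1 * ds) = 2 * ds by ring.
  exact: alg_width.
rewrite probability_setC; last by apply: measurableU.
have hU : (P (Bad 1%R `|` Bad (-1)%R) <= (eps / 2)%:E + (eps / 2)%:E)%E.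
  apply: le_trans; first exact: (measureU2 P (mB 1) (mB (-1))).
  by apply: leeD; apply: PB; [left|right].
apply: le_trans; last exact: (leeB (lexx 1%E) hU).
by rewrite -EFinD lee_fin; lra.
Qed.
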